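(* Let $\beta\in(0,\tfrac12)$, let $\lambda$ be an eigenvalue of $\Delta_\beta$, and let $\theta\in\mathcal{A}_\beta$. Then $\lambda\ge\theta$.
   Context: Tree: for an integer $m\ge2$, $\mathbb{T}_m$ has vertices the root $\emptyset$ and all finite sequences $(\emptyset,a_1,\dots,a_k)$, $a_i\in\{0,\dots,m-1\}$; $|x|$ is the level, successors of $x$ are $(x,i)$, $\hat x$ is the immediate predecessor of $x\ne\emptyset$. A branch is an infinite sequence $(x_n)_{n\ge0}$ with $x_0=\emptyset$, $x_{n+1}$ a successor of $x_n$; $\lim_{x\to y}u(x)=\lim_n u(x_n)$ for a branch $y=(x_n)$. Operator: $p_\beta=\beta/(1-\beta)$ for $\beta\in(0,1)$. $\Delta_\beta u(\emptyset)=\frac1m\sum_{i=0}^{m-1}u(\emptyset,i)-u(\emptyset)$ and, for $x\ne\emptyset$, $\Delta_\beta u(x)=\big(\beta u(\hat x)+\frac{1-\beta}{m}\sum_{i=0}^{m-1}u(x,i)-u(x)\big)p_\beta^{-|x|}$. Eigenvalues: $\lambda\in\mathbb{R}$ is an eigenvalue of $\Delta_\beta$ if there is a bounded $u\not\equiv0$ with $-\Delta_\beta u=\lambda u$ on $\mathbb{T}_m$ and $\lim_{x\to y}u(x)=0$ for every branch $y$. $\mathcal{A}_\beta=\{\lambda>0:\exists v:\mathbb{T}_m\to\mathbb{R}\text{ and constants }0<c<C\text{ with } c<v<C \text{ and } \Delta_\beta v+\lambda v\le0 \text{ on }\mathbb{T}_m\}$. *)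

(* Defs.v *)
From HB Require Import structures.
From mathcomp Require Import all_boot all_order all_algebra.
From mathcomp Require Import all_classical all_reals all_analysis.
Set Implicit Arguments. Unset Strict Implicit. Unset Printing Implicit Defensive.
Import Order.TTheory GRing.Theory Num.Theory.
Local Open Scope classical_set_scope.
Local Open Scope ring_scope.

(* Vertices of the m-ary tree T_m: finite sequences (a_1,...,a_k) with
   a_i in {0,...,m-1}; the root is the empty sequence [::].
   The successor (x,i) is rcons x i; the level |x| is size x. *)
Definition vertex (m : nat) := seq 'I_m.

Definition parent (m : nat) (x : vertex m) : vertex m := take (size x).-1 x.

Definition pbeta (R : realType) (b : R) : R := b / (1 - b).

Definition Delta (R : realType) (m : nat) (b : R) (u : vertex m -> R)
    (x : vertex m) : R :=
  match x with
  | [::] => (m%:R)^-1 * (\sum_(i < m) u (rcons x i)) - u x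
  | _ => (b * u (parent x) + (1 - b) / m%:R * (\sum_(i < m) u (rcons x i))
          - u x) * (pbeta b) ^- (size x)
  end.

Definition is_branch (m : nat) (X : nat -> vertex m) : Prop :=
  X 0%N = [::] /\ forall n, exists i : 'I_m, X n.+1 = rcons (X n) i.

Definition is_eigenvalue (R : realType) (m : nat) (b : R) (lam : R) : Prop :=
  exists u : vertex m -> R,
    (exists M : R, forall x, `|u x| <= M) /\
    (exists x, u x != 0) /\
    (forall x, - Delta b u x = lam * u x) /\
    (forall X : nat -> vertex m, is_branch X ->
       ((fun n => u (X n)) : R^nat) @ \oo --> 0).

Definition A_beta (R : realType) (m : nat) (b : R) : set R :=
  [set lam | 0 < lam /\
    exists (v : vertex m -> R) (c C : R), 0 < c /\ c < C /\
      (forall x, c < v x < C) /\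
      (forall x, Delta b v x + lam * v x <= 0)].

(* Main.v *)
Require Import Defs.
From mathcomp Require Import all_boot all_order all_algebra.
From mathcomp Require Import all_classical all_reals all_analysis.
From mathcomp Require Import ring lra.
Import Order.TTheory GRing.Theory Num.Theory.
Local Open Scope classical_set_scope.
Local Open Scope ring_scope.

Lemma step (R : realType) (m : nat) (b lam theta : R) (u v : vertex m -> R)
  (y : vertex m) :
  0 < b -> b < 1 -> (0 < m)%N -> lam < theta ->
  (forall x, 0 < v x) -> (forall x, - Delta b u x = lam * u x) ->
  (forall x, Delta b v x + theta * v x <= 0) ->
  0 < u y -> (y = [::] \/ u (parent y) / v (parent y) <= u y / v y) ->
  exists i : 'I_m, u y / v y < u (rcons y i) / v (rcons y i).
Proof.
move=> b0 b1 m0 lt vpos Eu Ev uy0 hpar.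
case: (pselect (exists i : 'I_m, u y / v y < u (rcons y i) / v (rcons y i))) => // H.
exfalso.
have w0 : 0 < u y / v y by rewrite divr_gt0.
have uyE : u y = (u y / v y) * v y by rewrite mulrAC -mulrA divff ?mulr1 // gt_eqF.
have Hi : forall i : 'I_m, u (rcons y i) <= (u y / v y) * v (rcons y i).
  move=> i; rewrite -ler_pdivrMr //; rewrite leNgt; apply/negP => hi.
  by apply: H; exists i.
have Hs : \sum_(i < m) u (rcons y i) <= (u y / v y) * \sum_(i < m) v (rcons y i).
  by rewrite mulr_sumr; apply: ler_sum => i _; apply: Hi.
have mpos : 0 < (m%:R : R)^-1 by rewrite invr_gt0 ltr0n.
have vy0 := vpos y.
move: hpar Hs uyE uy0 vy0 w0 {H Hi}.
set w := u y / v y.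
case: y @w => [|a y'] w hpar Hs uyE uy0 vy0 w0.
- have hu : -((m%:R)^-1 * (\sum_(i<m) u (rcons [::] i)) - u [::]) = lam * u [::] := Eu [::].
  have hv : (m%:R)^-1 * (\sum_(i<m) v (rcons [::] i)) - v [::] + theta * v [::] <= 0 := Ev [::].
  move: hu hv Hs.
  set su := \sum_(i < m) u _.
  set sv := \sum_(i < m) v _.
  move=> hu hv Hs.
  have h1 : (m%:R)^-1 * su <= (m%:R)^-1 * (w * sv) by rewrite ler_pM2l.
  have h2 : w * ((m%:R)^-1 * sv) <= w * ((1 - theta) * v [::]).
    by rewrite ler_pM2l //; lra.
  have : lam * u [::] >= theta * u [::].
    have e1 : (m%:R)^-1 * (w * sv) = w * ((m%:R)^-1 * sv) by rewrite mulrCA.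
    have e2 : w * ((1 - theta) * v [::]) = (1 - theta) * u [::] by rewrite uyE mulrCA.
    lra.
  rewrite ler_pM2r //; lra.
- case: hpar => // hpar.
  set Y := a :: y'.
  set P := pbeta b ^- size Y.
  have P0 : 0 < P by rewrite /P invr_gt0 exprn_gt0 // /pbeta divr_gt0 // subr_gt0.
  have c0 : 0 < (1 - b) / m%:R by rewrite divr_gt0 ?subr_gt0 ?ltr0n.
  have hu : -((b * u (parent Y) + (1 - b) / m%:R * (\sum_(i<m) u (rcons Y i)) - u Y) * P) = lam * u Y := Eu Y.
  have hv : (b * v (parent Y) + (1 - b) / m%:R * (\sum_(i<m) v (rcons Y i)) - v Y) * P + theta * v Y <= 0 := Ev Y.
  move: hu hv Hs.
  set su := \sum_(i < m) u _.
  set sv := \sum_(i < m) v _.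
  move=> hu hv Hs.
  have hp : u (parent Y) <= w * v (parent Y) by rewrite -ler_pdivrMr.
  set c := (1 - b) / m%:R in hu hv c0.
  have hA : b * u (parent Y) + c * su <= w * (b * v (parent Y) + c * sv).
    have g1 : b * u (parent Y) <= b * (w * v (parent Y)) by rewrite ler_pM2l.
    have g2 : c * su <= c * (w * sv) by rewrite ler_pM2l.
    have e : w * (b * v (parent Y) + c * sv) = b * (w * v (parent Y)) + c * (w * sv) by ring.
    lra.
  set A := b * u (parent Y) + c * su in hu hA.
  set S := b * v (parent Y) + c * sv in hv hA.
  have f1 : (A - u Y) * P <= (w * S - u Y) * P by rewrite ler_pM2r //; lra.
  have f2 : (w * S - u Y) * P = w * ((S - v Y) * P) by rewrite uyE; ring.
  have f3 : w * ((S - v Y) * P) <= w * (- theta * v Y) by rewrite ler_pM2l //; lra.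
  have f4 : w * (- theta * v Y) = - (theta * u Y) by rewrite uyE; ring.
  have : theta * u Y <= lam * u Y by lra.
  rewrite ler_pM2r //; lra.
Qed.
Lemma parent_rcons (m : nat) (y : vertex m) i : parent (rcons y i) = y.
Proof. by rewrite /parent size_rcons /= -cats1 take_size_cat. Qed.

Lemma main_pos (R : realType) (m : nat) (b lam theta : R) (u v : vertex m -> R)
  (x0 : vertex m) (c : R) :
  0 < b -> b < 1 -> (0 < m)%N -> lam < theta -> 0 < c ->
  (forall x, c < v x) -> (forall x, - Delta b u x = lam * u x) ->
  (forall x, Delta b v x + theta * v x <= 0) ->
  (forall X : nat -> vertex m, is_branch X ->
       ((fun n => u (X n)) : R^nat) @ \oo --> 0) ->
  0 < u x0 -> False.
Proof.
move=> b0 b1 m0 lt c0 vc Eu Ev Hbr ux0.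
have vpos : forall x, 0 < v x by move=> x; apply: lt_trans (vc x).
pose i0 : 'I_m := Ordinal m0.
pose f (y : vertex m) : vertex m :=
  match [pick i : 'I_m | u y / v y < u (rcons y i) / v (rcons y i)] with
  | Some i => rcons y i | None => rcons y i0 end.
have fR : forall y, exists i, f y = rcons y i.
  by move=> y; rewrite /f; case: pickP => [i _|_]; eexists.
have fP : forall y, 0 < u y -> (y = [::] \/ u (parent y) / v (parent y) <= u y / v y) ->
    exists i, f y = rcons y i /\ u y / v y < u (f y) / v (f y).
  move=> y uy hp.
  have [i hi] := @step R m b lam theta u v y b0 b1 m0 lt vpos Eu Ev uy hp.
  rewrite /f; case: pickP => [j hj|hn]; first by exists j.
  by move: (hn i); rewrite hi.
have exP : exists n, (0 < u (take n x0)) by exists (size x0); rewrite take_size.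
case: (ex_minnP exP) => na hna minna.
have nale : (na <= size x0)%N by apply: minna; rewrite take_size.
have hpa : take na x0 = [::] \/ u (parent (take na x0)) / v (parent (take na x0)) <= u (take na x0) / v (take na x0).
  case: na hna minna nale => [|n] hna minna nale; first by left; rewrite take0.
  right; rewrite /parent size_takel //= take_takel //.
  have : ~~ (0 < u (take n x0)) by apply/negP => h; have := minna _ h; rewrite ltnn.
  rewrite -leNgt => h; apply: (@le_trans _ _ 0); last by rewrite divr_ge0 // ltW.
  by rewrite ler_pdivrMr ?vpos // mul0r.
set a := take na x0 in hna hpa *.
have sa : size a = na by rewrite /a size_takel.
pose g (y : vertex m) := if (size y < size a)%N then take (size y).+1 a else f y.
pose X n := iter n g [::].
have C1 : forall n, (n <= size a)%N -> X n = take n a.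
  elim=> [|n IH] hn; first by rewrite take0.
  rewrite /X iterS -/(X n) IH ?(ltnW hn) // /g size_takel ?(ltnW hn) // hn.
  by [].
pose w y := u y / v y.
have C2 : forall k, [/\ size (X (size a + k)%N) = (size a + k)%N, 0 < u (X (size a + k)%N),
    w a <= w (X (size a + k)%N) &
    (X (size a + k)%N = [::] \/ w (parent (X (size a + k)%N)) <= w (X (size a + k)%N))].
  elim=> [|k [IH1 IH2 IH3 IH4]].
  - by rewrite addn0 C1 // take_size.
  have [i [hi hw]] := fP _ IH2 IH4.
  have E : X (size a + k.+1)%N = f (X (size a + k)%N).
    by rewrite addnS /X iterS -/(X _) /g IH1 ltnNge leq_addr.
  rewrite E hi size_rcons IH1 addnS parent_rcons; split => //.
  - rewrite -hi; have : 0 < w (f (X (size a + k)%N)).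
      by apply: lt_trans hw; rewrite /w divr_gt0.
    by rewrite /w ltr_pdivlMr ?vpos // mul0r.
  - by rewrite -hi; apply: le_trans IH3 (ltW hw).
  - by right; rewrite -hi; apply: ltW.
have Xb : is_branch X.
  split => // n.
  case: (ltnP n (size a)) => hn.
  - rewrite C1 // C1 ?(ltnW hn) //.
    by exists (nth i0 a n); rewrite (take_nth i0).
  - have [i hi] := fR (X n).
    exists i; have -> : X n.+1 = g (X n) by []; rewrite /g.
    have : size (X n) = n by rewrite -(subnKC hn); case: (C2 (n - size a)%N).
    by move=> ->; rewrite ltnNge hn.
have := Hbr X Xb.
have wa0 : 0 < w a by rewrite /w divr_gt0 // vpos.
move/cvgrPdist_lt => /(_ (w a * c)) /(_ (mulr_gt0 wa0 c0)) H.
have [n [hn1 hn2]] := filter_ex (filterI H (nbhs_infty_ge (size a))).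
move: hn1; rewrite sub0r normrN.
have [_ h2 h3 _] := C2 (n - size a)%N.
rewrite subnKC // in h2 h3.
have : w a * c <= u (X n).
  have e : u (X n) = w (X n) * v (X n) by rewrite /w mulrAC -mulrA divff ?mulr1 // gt_eqF.
  rewrite e; apply: le_trans (_ : w a * v (X n) <= _).
    by rewrite ler_pM2l // ltW.
  by rewrite ler_pM2r.
by rewrite gtr0_norm //; lra.
Qed.
Lemma DeltaN (R : realType) (m : nat) (b : R) (u : vertex m -> R) x :
  Delta b (fun y => - u y) x = - Delta b u x.
Proof. by case: x => [|a y]; rewrite /Delta sumrN; ring. Qed.

Theorem lemma5p2 (R : realType) (m : nat) (b lam theta : R) :
  (2 <= m)%N -> 0 < b -> b < 1 / 2 ->
  is_eigenvalue m b lam -> A_beta m b theta ->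
  theta <= lam.
Proof.
move=> m2 b0 b2 [u [_ [[x ux] [Eu Hbr]]]] [_ [v [c [C [c0 [_ [vc Ev]]]]]]].
rewrite leNgt; apply/negP => lt.
have m0 : (0 < m)%N by apply: leq_trans m2.
have b1 : b < 1 by lra.
have vc' : forall x, c < v x by move=> y; case/andP: (vc y).
case: (ltrgtP (u x) 0) ux => // hx _.
- apply: (@main_pos R m b lam theta (fun y => - u y) v x c) => //.
  + by move=> y; rewrite DeltaN opprK mulrN -Eu opprK.
  + move=> X hX; rewrite -oppr0; apply: cvgN; exact: Hbr.
  + by rewrite oppr_gt0.
- exact: (@main_pos R m b lam theta u v x c).
Qed.
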